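(* For each $n<\omega$ let $G_n$ be a non-trivial finite group, and suppose there is a fixed group $\Gamma$ such that $G_n=\Gamma$ for infinitely many $n<\omega$. Then the compact group $G=\prod_{n<\omega}G_n$ (product topology, each factor discrete, normalized Haar measure) has a subgroup that is not Haar measurable. *)

(* Defs.v *)
From HB Require Import structures.
From mathcomp Require Import all_boot all_order all_algebra all_fingroup.
From mathcomp Require Import all_classical all_reals all_analysis.
Set Implicit Arguments. Unset Strict Implicit. Unset Printing Implicit Defensive.
Import Order.TTheory GRing.Theory Num.Theory.
Local Open Scope classical_set_scope.
Local Open Scope ring_scope.

Section ProdGroup.
Variable gT : nat -> finGroupType.

Definition prodG := forall n : nat, gT n.

Definition prod_one : prodG := fun n => (1%g : gT n).
Definition prod_mul (x y : prodG) : prodG := fun n => (x n * y n)%g.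
Definition prod_inv (x : prodG) : prodG := fun n => ((x n)^-1)%g.

Definition is_subgroup (H : set prodG) : Prop :=
  H prod_one /\
  (forall x y, H x -> H y -> H (prod_mul x y)) /\
  (forall x, H x -> H (prod_inv x)).

Definition cyl (x : prodG) (n : nat) : set prodG :=
  [set y | forall i, (i < n)%N -> y i = x i].

Variable R : realType.

(* Haar (= product of normalized counting measures) mass of a basic cylinder
   of depth n. *)
Definition cyl_mass (n : nat) : R := (\prod_(i < n) (#|gT i|%:R : R))^-1.

(* Haar outer measure: infimum of total masses of countable covers by
   basic cylinders. *)
Definition haar_outer (A : set prodG) : \bar R :=
  ereal_inf [set (\sum_(0 <= k <oo) ((cyl_mass (c k).2)%:E))%E
            | c in [set c : nat -> prodG * nat |
                     A `<=` \bigcup_k cyl (c k).1 (c k).2]].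

(* Haar measurable = Caratheodory measurable for the Haar outer measure,
   i.e. measurable for the completed Haar measure. *)
Definition haar_measurable (A : set prodG) : Prop :=
  caratheodory_measurable haar_outer A.

End ProdGroup.

(* Main.v *)
Require Import Defs.
From HB Require Import structures.
From mathcomp Require Import all_boot all_order all_algebra all_fingroup.
From mathcomp Require Import all_classical all_reals all_analysis.
Set Implicit Arguments. Unset Strict Implicit. Unset Printing Implicit Defensive.
Import Order.TTheory GRing.Theory Num.Theory.
Local Open Scope classical_set_scope.
Local Open Scope ring_scope.
From mathcomp Require Import zify ring lra.
Section Gen.
Variable R : realType.
Local Open Scope ereal_scope.

Lemma series_le (u v : nat -> \bar R) : (forall k, 0 <= u k) -> (forall k, 0 <= v k) ->
  (forall n, exists m, \sum_(0 <= k < n) u k <= \sum_(0 <= k < m) v k) ->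
  \sum_(0 <= k <oo) u k <= \sum_(0 <= k <oo) v k.
Proof.
move=> u0 v0 H; apply: lime_le; first exact: is_cvg_nneseries.
apply: nearW => n; have [m hm] := H n; apply: (le_trans hm).
exact: nneseries_lim_ge.
Qed.
End Gen.

Section Prod.
Variable gT : nat -> finGroupType.
Variable R : realType.
Hypothesis hnt : forall n, (1 < #|gT n|)%N.
Local Notation G := (prodG gT).
Local Notation mass := (cyl_mass gT R).

Lemma mass0 : mass 0 = 1.
Proof. by rewrite /cyl_mass big_ord0 invr1. Qed.

Lemma massS n : mass n.+1 = mass n / #|gT n|%:R.
Proof. by rewrite /cyl_mass big_ord_recr /= invfM. Qed.

Lemma card_neq0 n : (#|gT n|%:R : R) != 0.
Proof. by rewrite pnatr_eq0 -lt0n (ltn_trans _ (hnt n)). Qed.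

Lemma mass_gt0 n : 0 < mass n.
Proof.
elim: n => [|n IH]; first by rewrite mass0.
by rewrite massS divr_gt0 // ltr0n (ltn_trans _ (hnt n)).
Qed.

Lemma prod_ge n : (n.+1 <= \prod_(i < n) #|gT i|)%N.
Proof.
elim: n => [|n IH]; first by rewrite big_ord0.
rewrite big_ord_recr /=; have := hnt n.
move: (\prod_(i < n) #|gT i|)%N IH => P h1 h2.
have := leq_mul h1 h2.
move: (#|gT n|) => c; lia.
Qed.

Lemma mass_le n : mass n <= (n.+1%:R)^-1.
Proof.
rewrite /cyl_mass -natr_prod lef_pV2 ?posrE ?ltr0n ?ler_nat ?prod_ge //.
by rewrite (leq_trans _ (prod_ge n)).
Qed.

Lemma mass_small (e : R) : 0 < e -> exists D, mass D <= e.
Proof.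
move=> e0; have he : 0 <= e^-1 by rewrite invr_ge0 ltW.
have := @archi_boundP _ (e^-1) he.
set D := Num.Def.archi_bound _ => hD; exists D.
apply: (le_trans (mass_le D)); rewrite -[e]invrK lef_pV2 ?posrE ?ltr0n ?invr_gt0 //.
by apply: (le_trans (ltW hD)); rewrite ler_nat.
Qed.

Definition upd (x : G) (n : nat) (a : gT n) : G := fun i =>
  match n =P i with ReflectT e => ecast j (gT j) e a | ReflectF _ => x i end.
Arguments upd x n a _ : clear implicits.

Lemma upd_eq x n a : upd x n a n = a.
Proof. by rewrite /upd; case: (n =P n) => [e|//]; rewrite (eq_axiomK e). Qed.

Lemma upd_neq x n a i : i != n -> upd x n a i = x i.
Proof. move=> /eqP ne; rewrite /upd; case: (n =P i) => // e; by case: ne. Qed.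

Definition agreeb (x p : G) d := [forall i : 'I_d, x i == p i].

Lemma agreebP x p d : reflect (forall i, (i < d)%N -> x i = p i) (agreeb x p d).
Proof.
apply: (iffP forallP) => [h i id|h i]; first exact/eqP/(h (Ordinal id)).
exact/eqP/h.
Qed.

Lemma cyl_agree x p d : cyl p d x <-> agreeb x p d.
Proof. by split => [h|/agreebP//]; apply/agreebP. Qed.

Lemma agree_sym x p d : agreeb x p d = agreeb p x d.
Proof. by apply/agreebP/agreebP => h i /h. Qed.

Lemma agree_upd_le x p d N a : (d <= N)%N -> agreeb (upd x N a) p d = agreeb x p d.
Proof.
move=> dN; apply/agreebP/agreebP => h i id; rewrite -h // ?upd_neq //;
  by apply/eqP => ein; move: id; rewrite ein; lia.
Qed.

Lemma agree_updS x p N a :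
  agreeb (upd x N a) p N.+1 = agreeb x p N && (a == p N).
Proof.
apply/agreebP/andP => [h|[/agreebP h /eqP ha] i].
  split; last by rewrite -h // upd_eq.
  by apply/agreebP => i iN; rewrite -h ?upd_neq //; [lia|apply/eqP; lia].
rewrite ltnS leq_eqVlt => /orP[/eqP ->|iN]; first by rewrite upd_eq.
by rewrite upd_neq ?h //; apply/eqP; lia.
Qed.

Definition ocyl (o : option (G * nat)) : set G :=
  if o is Some (p, d) then cyl p d else set0.
Definition omass (o : option (G * nat)) : \bar R :=
  if o is Some (p, d) then (mass d)%:E else 0%E.

Lemma omass_ge0 o : (0 <= omass o)%E.
Proof. by case: o => [[p d]|] //=; rewrite lee_fin ltW // mass_gt0. Qed.

Definition restr (o : option (G * nat)) (x : G) (N : nat) : option (G * nat) :=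
  match o with
  | Some (p, d) => if (d <= N)%N then (if agreeb x p d then Some (x, N) else None)
                   else (if agreeb p x N then Some (p, d) else None)
  | None => None end.

Lemma restr_cover o x N y : ocyl o y -> cyl x N y -> ocyl (restr o x N) y.
Proof.
case: o => [[p d]|] //= /cyl_agree hp /cyl_agree hx.
case: ifP => dN.
  have -> : agreeb x p d.
    apply/agreebP => i id; move/agreebP: hp => <- //.
    by move/agreebP: hx => -> //; lia.
  exact/cyl_agree.
have -> : agreeb p x N.
  apply/agreebP => i iN; move/agreebP: hp => <-; last by lia.
  by move/agreebP: hx => ->.
exact/cyl_agree.
Qed.

Lemma sum_const_mass N :
  (\sum_(a : gT N) (mass N.+1)%:E)%E = (mass N)%:E.
Proof.
rewrite sumEFin sumr_const -mulr_natr massS mulfVK //.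
exact: card_neq0.
Qed.

Lemma restr_add o x N :
  omass (restr o x N) = (\sum_(a : gT N) omass (restr o (upd x N a) N.+1))%E.
Proof.
case: o => [[p d]|] /=; last by rewrite big1.
case: (leqP d N) => dN.
  rewrite (leqW dN).
  under eq_bigr do rewrite agree_upd_le //.
  case: ifP => _ /=; last by rewrite big1.
  by rewrite sum_const_mass.

case: (leqP d N.+1) => dN1.
  have ed : d = N.+1 by lia.
  subst d; under eq_bigr do rewrite agree_updS.
  rewrite agree_sym; case: (agreeb x p N) => /=; last by rewrite big1.
  rewrite (bigD1 (p N)) //= eqxx big1 ?adde0 // => a /negbTE -> //.
under eq_bigr do rewrite agree_sym agree_updS.
rewrite agree_sym; case: (agreeb x p N) => /=; last by rewrite big1.
rewrite (bigD1 (p N)) //= eqxx big1 ?adde0 // => a /negbTE -> //.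
Qed.

Local Open Scope ereal_scope.

Definition covers (A : set G) (c : nat -> option (G * nat)) :=
  A `<=` \bigcup_k ocyl (c k).
Definition smass (c : nat -> option (G * nat)) := \sum_(0 <= k <oo) omass (c k).
Definition outer2 (A : set G) : \bar R :=
  ereal_inf [set smass c | c in [set c | covers A c]].

Lemma smass_ge0 c : 0 <= smass c.
Proof. by apply: nneseries_ge0 => n _ _; exact: omass_ge0. Qed.

Lemma outer2_le A c : covers A c -> outer2 A <= smass c.
Proof. by move=> hc; apply: ereal_inf_lbound; exists c. Qed.

Lemma outer2_ge A t : (forall c, covers A c -> t <= smass c) -> t <= outer2 A.
Proof. by move=> h; apply: le_ereal_inf_tmp => _ [c hc <-]; exact: h. Qed.

Lemma outer2_ge0 A : 0 <= outer2 A.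
Proof. by apply: outer2_ge => c _; exact: smass_ge0. Qed.

Lemma outer2_mono A B : A `<=` B -> outer2 A <= outer2 B.
Proof.
move=> AB; apply: outer2_ge => c hc; apply: outer2_le.
by move=> y /AB /hc.
Qed.

Lemma series_single (a : \bar R) : 0 <= a ->
  \sum_(0 <= k <oo) (if k == 0%N then a else 0) = a.
Proof.
move=> a0; rewrite (nneseries_split 0 1); last by move=> k _; case: ifP.
rewrite add0n eseries0 ?adde0; last by move=> i; case: i.
by rewrite big_nat1.
Qed.

Lemma outer2_cyl x N : outer2 (cyl x N) <= (mass N)%:E.
Proof.
pose c k := if k == 0%N then Some (x, N) else None.
apply: (le_trans (outer2_le (c := c) _)).
  by move=> y hy; exists 0%N.
rewrite /smass (eq_eseriesr (g := fun k => if k == 0%N then (mass N)%:E else 0)).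
  by rewrite series_single // lee_fin ltW // mass_gt0.
by move=> [|i].
Qed.

Lemma outer2_le1 A : outer2 A <= 1.
Proof.
have h : A `<=` cyl (prod_one gT) 0 by [].
apply: (le_trans (outer2_mono h)).
by apply: (le_trans (outer2_cyl _ _)); rewrite mass0.
Qed.

Lemma outer2_fin A : outer2 A \is a fin_num.
Proof.
by rewrite ge0_fin_numE ?outer2_ge0 // (le_lt_trans (outer2_le1 A)) // ltry.
Qed.

Lemma outer2_translate A B t :
  A `<=` [set prod_mul t b | b in B] -> outer2 A <= outer2 B.
Proof.
move=> AB; apply: outer2_ge => c hc.
pose c' k := omap (fun pd : G * nat => (prod_mul t pd.1, pd.2)) (c k).
apply: (le_trans (outer2_le (c := c') _)).
  move=> a /AB [b /hc [k _ hk] <-]; exists k => //.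
  rewrite /c'; move: hk; case: (c k) => [[p d]|] //= hk i id.
  by rewrite /prod_mul hk.
rewrite /smass (eq_eseriesr (g := fun k => omass (c k))) //.
by move=> k _; rewrite /c'; case: (c k) => [[p d]|].
Qed.

Section Combine.
Variables (T : finType) (x0 : T) (e : T -> nat -> option (G * nat)).
Local Notation M := #|T|.
Definition combc k := e (nth x0 (enum T) (k %% M)) (k %/ M).

Lemma M_gt0 : (0 < M)%N.
Proof. by apply/card_gt0P; exists x0. Qed.

Lemma combc_at j i : (i < M)%N -> combc (j * M + i) = e (nth x0 (enum T) i) j.
Proof.
move=> iM; rewrite /combc modnMDl modn_small // divnMDl ?M_gt0 //.
by rewrite divn_small // addn0.
Qed.

Lemma combc_cover a j y : ocyl (e a j) y -> exists k, ocyl (combc k) y.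
Proof.
move=> h; exists (j * M + index a (enum T))%N.
rewrite combc_at ?nth_index ?mem_enum //.
by rewrite cardE index_mem mem_enum.
Qed.

Lemma sum_enum_nth (g : T -> \bar R) :
  \sum_(0 <= i < M) g (nth x0 (enum T) i) = \sum_(a : T) g a.
Proof.
rewrite cardE -(big_nth x0 (fun=> true) g).
by rewrite big_enum.
Qed.

Lemma combine_partial n : \sum_(0 <= k < M * n) omass (combc k) =
  \sum_(0 <= j < n) \sum_(a : T) omass (e a j).
Proof.
elim: n => [|n IH]; first by rewrite muln0 !big_geq.
rewrite big_nat_recr //= -IH mulnSr (big_cat_nat (n := M * n)) //= ?leq_addr //.
congr (_ + _).
rewrite -{1}[(M * n)%N]add0n big_addn addKn -sum_enum_nth.
rewrite !big_mkord; apply: eq_bigr => i _.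
by rewrite addnC mulnC combc_at.
Qed.

Lemma combine_mass : smass combc = \sum_(a : T) smass (e a).
Proof.
rewrite /smass -nneseries_sum; last by move=> *; exact: omass_ge0.
apply/eqP; rewrite eq_le; apply/andP; split.
  apply: series_le => [k|k|n]; [exact: omass_ge0| by apply: sume_ge0 => *; exact: omass_ge0|].
  exists n; rewrite -combine_partial.
  apply: lee_sum_nneg_natr => [k _ _|]; first exact: omass_ge0.
  by rewrite leq_pmull ?M_gt0.
apply: series_le => [k|k|n]; [by apply: sume_ge0 => *; exact: omass_ge0|exact: omass_ge0|].
by exists (M * n)%N; rewrite combine_partial.
Qed.
End Combine.

Lemma outer2_subadd (T : finType) (x0 : T) A (B : T -> set G) :
  A `<=` (fun y => exists a, B a y) -> outer2 A <= \sum_(a : T) outer2 (B a).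
Proof.
move=> AB; apply/lee_addgt0Pr => eps eps0.
have Mpos : (0 < #|T|%:R :> R)%R by rewrite ltr0n; apply/card_gt0P; exists x0.
have eM : (0 < eps / #|T|%:R)%R by rewrite divr_gt0.
have : forall a, exists c, covers (B a) c /\ smass c < outer2 (B a) + (eps / #|T|%:R)%:E.
  move=> a; have : outer2 (B a) < outer2 (B a) + (eps / #|T|%:R)%:E.
    by rewrite lteDl ?outer2_fin // lte_fin.
  by move/ereal_inf_lt => [_ [c hc <-] lt]; exists c.
move/choice => [e he].
apply: (le_trans (outer2_le (c := combc x0 e) _)).
  move=> y /AB [a hy]; have [j _ hj] := (proj1 (he a)) y hy.
  have [k hk] := combc_cover x0 hj; exists k; [by []|exact: hk].
rewrite combine_mass.
have -> : eps%:E = \sum_(a : T) (eps / #|T|%:R)%:E.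
  rewrite sumEFin sumr_const -(mulr_natr (eps / #|T|%:R)) mulfVK //.
  by rewrite gt_eqF.
rewrite -big_split /=; apply: lee_sum => a _.
exact: ltW (proj2 (he a)).
Qed.

Lemma outer_eq A : haar_outer R A = outer2 A.
Proof.
apply/eqP; rewrite eq_le; apply/andP; split; last first.
  apply: le_ereal_inf_tmp => _ [c hc <-].
  apply: (le_trans (outer2_le (c := fun k => Some (c k)) _)).
    move=> y /hc [k _ hk]; exists k => //=; move: hk; by case: (c k).
  rewrite /smass (eq_eseriesr (g := fun k => (mass (c k).2)%:E)) //.
  by move=> k _; case: (c k).
apply: outer2_ge => c hc; apply/lee_addgt0Pr => eps eps0.
have : forall k, exists D, (mass D <= eps / (2 ^ k.+1)%:R)%R.
  by move=> k; apply: mass_small; rewrite divr_gt0 // ltr0n expn_gt0.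
move/choice => [D hD].
pose c' k := match c k with Some pd => pd | None => (prod_one gT, D k) end.
apply: (@le_trans _ _ (\sum_(0 <= k <oo) (mass (c' k).2)%:E)).
  apply: ereal_inf_lbound; exists c' => //.
  move=> y /hc [k _ hk]; exists k => //; rewrite /c'; move: hk.
  by case: (c k) => [[p d]|].
apply: (@le_trans _ _ (\sum_(0 <= k <oo) (omass (c k) + (eps / (2 ^ k.+1)%:R)%:E))).
  apply: lee_nneseries => [k _ _|k _]; first by rewrite lee_fin ltW // mass_gt0.
  rewrite /c'; case: (c k) => [[p d]|] /=.
    by rewrite leeDl // lee_fin divr_ge0 // ltW.
  by rewrite add0e lee_fin.
exact: epsilon_trick (fun k => omass_ge0 _) (ltW eps0).
Qed.

Definition mfun c x N := smass (fun k => restr (c k) x N).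

Lemma mfun_ge0 c x N : 0 <= mfun c x N.
Proof. exact: smass_ge0. Qed.

Lemma mfun_add c x N : mfun c x N = \sum_(a : gT N) mfun c (upd x N a) N.+1.
Proof.
rewrite /mfun /smass -nneseries_sum; last by move=> *; exact: omass_ge0.
by apply: eq_eseriesr => k _; rewrite restr_add.
Qed.

Lemma mfun0 c x : mfun c x 0 = smass c.
Proof.
apply: eq_eseriesr => k _; case: (c k) => [[p d]|] //=.
case: (leqP d 0) => d0 /=.
  have -> : d = 0%N by lia.
  by rewrite (_ : agreeb x p 0 = true) //; apply/agreebP.
by rewrite (_ : agreeb p x 0 = true) //; apply/agreebP.
Qed.

Lemma mfun_cover A c x N : covers A c ->
  covers (A `&` cyl x N) (fun k => restr (c k) x N).
Proof.
move=> hc y [/hc [k _ hk] hy]; exists k => //; exact: restr_cover.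
Qed.

Lemma outer2_mfun A c x N : covers A c -> outer2 (A `&` cyl x N) <= mfun c x N.
Proof. by move=> hc; apply: outer2_le; exact: mfun_cover. Qed.

Lemma lift (F F' : G -> nat -> \bar R) N :
  (forall x n, (n < N)%N -> F x n <= \sum_(a : gT n) F (upd x n a) n.+1) ->
  (forall x n, (n < N)%N -> \sum_(a : gT n) F' (upd x n a) n.+1 <= F' x n) ->
  (forall x, F x N <= F' x N) -> forall x, F x 0%N <= F' x 0%N.
Proof.
move=> hF hF' hN.
suff h : forall j, (j <= N)%N -> forall x, F x (N - j)%N <= F' x (N - j)%N.
  by move=> x; have := h N (leqnn N) x; rewrite subnn.
elim=> [|j IH] jN x; first by rewrite subn0.
have e : (N - j.+1).+1 = (N - j)%N by lia.
apply: (le_trans (hF x _ _)); first by lia.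
apply: (le_trans _ (hF' x _ _)); last by lia.
apply: lee_sum => a _; rewrite e; apply: IH; lia.
Qed.

Lemma smass_ge_term c k : omass (c k) <= smass c.
Proof.
apply: (le_trans _ (@nneseries_lim_ge _ _ xpredT 0 k.+1 _)); last by move=> *; exact: omass_ge0.
rewrite big_nat_recr //= leeDr //; apply: sume_ge0 => *; exact: omass_ge0.
Qed.

Definition bad (c : nat -> option (G * nat)) x n :=
  forall K, exists y, cyl x n y /\ forall k, (k < K)%N -> ~ ocyl (c k) y.

Lemma bad_step c x n : bad c x n -> exists a, bad c (upd x n a) n.+1.
Proof.
move=> hb; apply: contrapT => hn.
have : forall a, exists K, forall y, cyl (upd x n a) n.+1 y ->
    exists2 k, (k < K)%N & ocyl (c k) y.
  move=> a; apply: contrapT => ha; apply: hn; exists a => K.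
  apply: contrapT => hK; apply: ha; exists K => y hy.
  apply: contrapT => hk; apply: hK; exists y; split => // k kK hc.
  by apply: hk; exists k.
move/choice => [Kf hKf].
have [y [hy hyK]] := hb (\max_(a : gT n) Kf a).
have : cyl (upd x n (y n)) n.+1 y.
  move=> i; rewrite ltnS leq_eqVlt => /orP[/eqP ->|iN]; first by rewrite upd_eq.
  by rewrite upd_neq ?hy //; apply/eqP; lia.
move/hKf => [k kK hk]; apply: (hyK k) => //.
by apply: (leq_trans kK); apply: leq_bigmax.
Qed.

Lemma konig c : covers setT c -> exists K, forall y, exists2 k, (k < K)%N & ocyl (c k) y.
Proof.
move=> hc; apply: contrapT => hK.
have b0 : bad c (prod_one gT) 0.
  move=> K; apply: contrapT => hy; apply: hK; exists K => y.
  apply: contrapT => hk; apply: hy; exists y; split => // k kK ck.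
  by apply: hk; exists k.
have : forall p : G * nat, exists y : G,
    (bad c p.1 p.2 -> bad c y p.2.+1) /\ agreeb y p.1 p.2.
  move=> [x n] /=; have [hb|hb] := pselect (bad c x n).
    have [a ha] := bad_step hb; exists (upd x n a); split => //.
    by rewrite agree_upd_le //; apply/agreebP.
  exists x; split => //; exact/agreebP.
move/choice => [g hg].
pose X := fix X n := if n is m.+1 then g (X m, m) else prod_one gT.
have hX : forall n, bad c (X n) n.
  by elim=> [//|n IH]; exact: (proj1 (hg (X n, n))).
have hXa : forall j m, (j <= m)%N -> forall i, (i < j)%N -> X m i = X j i.
  move=> j; elim=> [|m IH] jm i ij; first by have -> : j = 0%N by lia.
  case: (leqP j m) => jm'; last by have -> : j = m.+1 by lia.
  rewrite -IH //; have /agreebP /= h := proj2 (hg (X m, m)); apply: h; lia.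
pose z : G := fun i => X i.+1 i.
have hz : forall n, cyl (X n) n z.
  move=> n i iN; rewrite /z; apply/esym/hXa => //.
have [k _ hk] := hc z I.
case ek : (c k) hk => [[p d]|] //= hk.
have [y [hy hyk]] := hX d k.+1.
apply: (hyk k) => //; rewrite ek /= => i id.
by rewrite hy // -(hz d i id) hk.
Qed.

Definition depth (o : option (G * nat)) := if o is Some (_, d) then d else 0%N.

Lemma outer2_T : 1 <= outer2 setT.
Proof.
apply: outer2_ge => c hc.
have [K hK] := konig hc.
pose N := (\max_(k < K) depth (c k))%N.
pose ch k := if (k < K)%N then c k else None.
have := @lift (fun _ n => (mass n)%:E) (mfun ch) N.
move=> /(_ _ _ _ (prod_one gT)) /=; rewrite mass0 mfun0 => h.
apply: (le_trans (h _ _ _)).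
- by move=> x n _; rewrite sum_const_mass.
- by move=> x n _; rewrite -mfun_add.
- move=> x; have [k kK hk] := hK x.
  apply: (le_trans _ (smass_ge_term _ k)).
  rewrite /ch kK; case ek : (c k) hk => [[p d]|] //= hk.
  have dN : (d <= N)%N.
    by have := @leq_bigmax _ (fun k : 'I_K => depth (c k)) (Ordinal kK); rewrite /= ek.
  rewrite dN; case: ifP => //= /negP[]; exact/cyl_agree.
- apply: lee_nneseries => [k _ _|k _]; first exact: omass_ge0.
  by rewrite /ch; case: ifP => // _; exact: omass_ge0.
Qed.

Lemma cyl0 (x : G) : cyl x 0 = setT.
Proof. by apply/seteqP; split => // y _ i. Qed.

Lemma outer2_transl t B : outer2 [set prod_mul t b | b in B] <= outer2 B.
Proof. by apply: (@outer2_translate _ B t). Qed.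

Lemma sum_const_massR N : (\sum_(a : gT N) mass N.+1)%R = mass N.
Proof. by have := sum_const_mass N; rewrite sumEFin => -[]. Qed.

Fixpoint gfun (N : nat) (cond : G -> bool) (j : nat) (x : G) : R :=
  match j with
  | 0%N => if cond x then mass N else 0%R
  | j'.+1 => (\sum_(a : gT (N - j'.+1)) gfun N cond j' (upd x (N - j'.+1) a))%R
  end.

Lemma gfun_add N cond n x : (n < N)%N ->
  gfun N cond (N - n) x = (\sum_(a : gT n) gfun N cond (N - n.+1) (upd x n a))%R.
Proof.
move=> nN; have e : (N - n = (N - n.+1).+1)%N by lia.
rewrite e /=; have e2 : (N - (N - n.+1).+1 = n)%N by lia.
by rewrite e2.
Qed.

Lemma sub_children A x n : outer2 (A `&` cyl x n) <=
    \sum_(a : gT n) outer2 (A `&` cyl (upd x n a) n.+1).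
Proof.
apply: (outer2_subadd 1%g) => w [Hw hw]; exists (w n); split => //.
move=> i; rewrite ltnS leq_eqVlt => /orP[/eqP ->|iN]; first by rewrite upd_eq.
by rewrite upd_neq ?hw //; apply/eqP; lia.
Qed.

Section Sub.
Variable H : set G.
Hypothesis Hsub : is_subgroup H.
Hypothesis Hfin : forall t : G, (exists N, forall i, (N < i)%N -> t i = 1%g) -> H t.

Lemma H_mul x y : H x -> H y -> H (prod_mul x y).
Proof. by case: Hsub => _ [h _]; exact: h. Qed.
Lemma H_inv x : H x -> H (prod_inv x).
Proof. by case: Hsub => _ [_ h]; exact: h. Qed.

Lemma transl_level y N a :
  outer2 (H `&` cyl (upd y N a) N.+1) <= outer2 (H `&` cyl y N.+1).
Proof.
set z := upd y N a.
pose t : G := fun i => if (i <= N)%N then (z i * (y i)^-1)%g else 1%g.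
have Ht : H t by apply: Hfin; exists N => i iN; rewrite /t ifF //; lia.
apply: (@outer2_translate _ _ t) => w [Hw hw].
exists (prod_mul (prod_inv t) w).
  split; first by apply: H_mul => //; exact: H_inv.
  move=> i iN; rewrite /prod_mul /prod_inv /t ifT; last by lia.
  by rewrite hw // invMg invgK -mulgA mulVg mulg1.
apply: functional_extensionality_dep => i.
by rewrite /prod_mul /prod_inv mulKVg.
Qed.

Lemma levelL (r : R) : r%:E <= outer2 H ->
  forall N x, (r * mass N)%:E <= outer2 (H `&` cyl x N).
Proof.
move=> hr; elim=> [|N IH] y.
  by rewrite mass0 mulr1 cyl0 setIT.
have sub : outer2 (H `&` cyl y N) <=
    \sum_(a : gT N) outer2 (H `&` cyl (upd y N a) N.+1).
  apply: (outer2_subadd 1%g) => w [Hw hw]; exists (w N); split => //.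
  move=> i; rewrite ltnS leq_eqVlt => /orP[/eqP ->|iN]; first by rewrite upd_eq.
  by rewrite upd_neq ?hw //; apply/eqP; lia.
have := le_trans (IH y) (le_trans sub (lee_sum _ (fun a _ => @transl_level y N a))).
rewrite -(fineK (outer2_fin (H `&` cyl y N.+1))) sumEFin sumr_const lee_fin => h.
rewrite lee_fin massS mulrA ler_pdivrMr ?ltr0n ?(ltn_trans _ (hnt N)) //.
by rewrite mulr_natr.
Qed.

Lemma r_lt1_false : 0 < outer2 H -> outer2 H < 1 -> False.
Proof.
move=> h0 h1.
set r := fine (outer2 H).
have er : outer2 H = r%:E by rewrite /r fineK ?outer2_fin.
have r0 : (0 < r)%R by rewrite -lte_fin -er.
have r1 : (r < 1)%R by rewrite -lte_fin -er.
set eps := (r / 2)%R.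
set del := (r * (1 - r) / 4)%R.
have eps0 : (0 < eps)%R by rewrite divr_gt0.
have del0 : (0 < del)%R by rewrite divr_gt0 // mulr_gt0 // subr_gt0.
have [c hc hS] : exists2 c, covers H c & smass c < (r + del)%:E.
  have : outer2 H < (r + del)%:E by rewrite er lte_fin ltrDl.
  by move/ereal_inf_lt => [_ [c hc <-] lt]; exists c.
have Sfin : smass c \is a fin_num.
  by rewrite ge0_fin_numE ?smass_ge0 // (lt_trans hS) // ltry.
set S := fine (smass c).
have eS : smass c = S%:E by rewrite /S fineK.
have [K hK] : exists K, (S - eps)%:E <= \sum_(0 <= k < K) omass (c k).
  have : (S - eps)%:E < smass c by rewrite eS lte_fin ltrBlDr ltrDl.
  move/lte_lim; move=> /(_ _ _) [].
  - by apply: lee_sum_nneg_natr => *; exact: omass_ge0.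
  - by apply: is_cvg_nneseries => *; exact: omass_ge0.
  by move=> K _ hK; exists K; apply: hK => /=.
pose ct k := if (k < K)%N then None else c k.
have ect : smass ct = \sum_(K <= k <oo) omass (c k).
  rewrite /smass (nneseries_split 0 K); last by move=> *; exact: omass_ge0.
  rewrite add0n big_nat big1 ?add0e; last by move=> i /andP[_ iK]; rewrite /ct iK.
  apply: congr_lim; apply/funext => n; apply: eq_big_nat => i /andP[Ki _].
  by rewrite /ct ltnNge Ki.
have hsplit : smass c = \sum_(0 <= k < K) omass (c k) + smass ct.
  by rewrite ect /smass (nneseries_split 0 K) // => *; exact: omass_ge0.
have ctfin : smass ct \is a fin_num.
  rewrite ge0_fin_numE ?smass_ge0 // (le_lt_trans _ (ltry S)) // -eS.
  apply: lee_nneseries => [k _ _|k _]; first exact: omass_ge0.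
  by rewrite /ct; case: ifP => // _; exact: omass_ge0.
set T := fine (smass ct).
have eT : smass ct = T%:E by rewrite /T fineK.
have hdfin : \sum_(0 <= k < K) omass (c k) \is a fin_num.
  have hd0 : 0 <= \sum_(0 <= k < K) omass (c k) by apply: sume_ge0 => *; exact: omass_ge0.
  rewrite ge0_fin_numE //; apply: (le_lt_trans _ (ltry S)); rewrite -eS hsplit.
  apply: leeDl; exact: smass_ge0.
have Teps : (T <= eps)%R.
  move: hsplit hK; rewrite eS eT -(fineK hdfin) -EFinD => -[->].
  by rewrite lee_fin; lra.
pose N := (\max_(k < K) depth (c k))%N.
have hdep : forall k p d, (k < K)%N -> c k = Some (p, d) -> (d <= N)%N.
  move=> k p d kK ek.
  by have := @leq_bigmax _ (fun k : 'I_K => depth (c k)) (Ordinal kK); rewrite /= ek.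
pose cond x := [exists k : 'I_K, restr (c k) x N != None].
pose gg x n := gfun N cond (N - n) x.
have gg_add : forall x n, (n < N)%N -> gg x n = (\sum_(a : gT n) gg (upd x n a) n.+1)%R.
  by move=> x n nN; rewrite /gg gfun_add.
have ggN : forall x, gg x N = if cond x then mass N else 0%R.
  by move=> x; rewrite /gg subnn.
have i1 : ((r + (1 - r) * gg (prod_one gT) 0%N)%:E <= smass c).
  have := @lift (fun x n => (r * mass n + (1 - r) * gg x n)%:E) (mfun c) N.
  move=> /(_ _ _ _ (prod_one gT)) /=; rewrite mass0 mulr1 mfun0; apply.
  - move=> x n nN; rewrite sumEFin big_split /= -!mulr_sumr sum_const_massR.
    by rewrite -gg_add.
  - by move=> x n _; rewrite -mfun_add.
  - move=> x; rewrite ggN; case: ifP => hcx.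
      have [k /negP hk] := existsP hcx.
      apply: (le_trans _ (smass_ge_term _ k)).
      case ek : (c k) hk => [[p d]|] /= hk; last by exfalso; apply: hk.
      move: hk; rewrite (hdep k p d) ?ltn_ord //.
      case: ifP => [_ _|_ h]; last by exfalso; apply: h.
      by rewrite /= lee_fin; lra.
    rewrite mulr0 addr0.
    apply: (le_trans (levelL _ _ _)); last exact: outer2_mfun.
    by rewrite er.
have i2 : outer2 H <= (gg (prod_one gT) 0%N)%:E + smass ct.
  have := @lift (fun x n => outer2 (H `&` cyl x n))
    (fun x n => (gg x n)%:E + mfun ct x n) N.
  move=> /(_ _ _ _ (prod_one gT)) /=; rewrite cyl0 setIT mfun0; apply.
  - by move=> x n _; exact: sub_children.
  - move=> x n nN; rewrite big_split /= sumEFin -gg_add //.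
    by rewrite -mfun_add.
  - move=> x; rewrite ggN; case: ifP => hcx.
      apply: (le_trans (outer2_mono (B := cyl x N) _)); first by move=> y [].
      apply: (le_trans (outer2_cyl _ _)); rewrite leeDl //; exact: mfun_ge0.
    rewrite add0e; apply: outer2_le => y [Hy hy].
    have [k _ hk] := hc y Hy; exists k => //.
    have hr := restr_cover hk hy.
    rewrite /ct; case: ifP => kK; last exact: hr.
    have : cond x.
      by apply/existsP; exists (Ordinal kK) => /=; move: hr; case: (restr (c k) x N).
    by rewrite hcx.
move: i1 i2; rewrite er eT eS -EFinD !lee_fin => i1 i2.
set G0 := gg (prod_one gT) 0%N in i1 i2.
have hG0 : (r / 2 <= G0)%R by move: Teps; rewrite /eps; lra.
have : ((1 - r) * (r / 2) <= (1 - r) * G0)%R by rewrite ler_wpM2l // subr_ge0 ltW.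
move: hS; rewrite eS lte_fin => hS.
have : (0 < (1 - r) * r)%R by rewrite mulr_gt0 // subr_gt0.
rewrite /del in hS; lra.
Qed.

Lemma not_meas :
  (exists (T : finType) (x0 : T) (g : T -> G),
     forall x, exists a h, H h /\ x = prod_mul (g a) h) ->
  (exists g : G, forall h, H h -> ~ H (prod_mul g h)) ->
  ~ haar_measurable R H.
Proof.
move=> [T [x0 [g hg]]] [g1 hg1] hm.
have h0 : 0 < outer2 H.
  rewrite lt_neqAle outer2_ge0 andbT; apply/negP => /eqP e0.
  have : 1 <= \sum_(a : T) outer2 [set prod_mul (g a) b | b in H].
    apply: (le_trans outer2_T); apply: (outer2_subadd x0) => x _.
    by have [a [h [Hh ->]]] := hg x; exists a; exists h.
  rewrite big1 ?lee_fin ?ler10 // => a _.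
  apply/eqP; rewrite eq_le outer2_ge0 andbT e0; exact: outer2_transl.
have h1 : 1 <= outer2 H.
  rewrite leNgt; apply/negP => lt; exact: r_lt1_false.
have h2 : 1 <= outer2 (~` H).
  apply: (le_trans h1); apply: (@le_trans _ _ (outer2 [set prod_mul g1 b | b in H])).
    apply: (@outer2_translate _ _ (prod_inv g1)) => h Hh.
    exists (prod_mul g1 h); first by exists h.
    by apply: functional_extensionality_dep => i; rewrite /prod_mul /prod_inv mulKg.
  by apply: outer2_mono => _ [h Hh <-]; exact: hg1.
have := hm setT; rewrite !outer_eq !setTI => e.
have := leeD h1 h2; rewrite -e => h3.
have := le_trans h3 (outer2_le1 _); rewrite -EFinD lee_fin; lra.
Qed.
End Sub.
End Prod.

Section Construct.
Variables (gT : nat -> finGroupType) (Gamma : finGroupType).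
Hypothesis hnt : forall n, (1 < #|gT n|)%N.
Let I := [set n : nat | (setTfor (gT n) \isog setTfor Gamma)%g].
Hypothesis hinf : infinite_set I.
Local Notation G := (prodG gT).

Lemma I_large N : exists n, (N <= n)%N /\ I n.
Proof.
apply: contrapT => h; apply: hinf; apply: (@sub_finite_set _ _ `I_N); last exact: finite_II.
move=> n In; rewrite /= ltnNge; apply/negP => Nn; apply: h; by exists n.
Qed.

Definition Ffil : set_system nat := fun A => exists N, forall n, (N <= n)%N -> I n -> A n.

Lemma Ffil_proper : ProperFilter Ffil.
Proof.
apply: Build_ProperFilter_ex.
  by move=> P [N hN]; have [n [Nn In]] := I_large N; exists n; exact: hN.
split.
- by exists 0%N.
- move=> A B [N1 h1] [N2 h2]; exists (maxn N1 N2) => n; rewrite geq_max => /andP[n1 n2] In.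
  by split; [exact: h1|exact: h2].
- by move=> A B AB [N h]; exists N => n Nn In; apply: AB; exact: h.
Qed.

Lemma hiso n : exists f : gT n -> Gamma, I n ->
  [/\ (forall x y, f (x * y)%g = (f x * f y)%g), injective f & forall z, exists x, f x = z].
Proof.
case: (pselect (I n)) => In; last by exists (fun _ => 1%g).
have := In; rewrite /I /= => /isogP [f injf imf]; exists f => _; split.
- by move=> x y; rewrite morphM ?inE.
- by move=> x y; move/injmP: injf => h; apply: h; rewrite inE.
- move=> z; have : z \in (f @* setTfor (gT n))%g by rewrite imf inE.
  by case/morphimP => x _ _ ->; exists x.
Qed.

Definition iota n : gT n -> Gamma := sval (cid (hiso n)).

Lemma iota_spec n : I n ->
  [/\ (forall x y : gT n, iota (x * y)%g = (iota x * iota y)%g), injective (@iota n)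
   & forall z, exists x : gT n, iota x = z].
Proof. exact: (svalP (cid (hiso n))). Qed.

Lemma iota1 n : I n -> iota (1%g : gT n) = 1%g.
Proof.
move=> /iota_spec [hm _ _]; have := hm 1%g 1%g; rewrite mulg1 => e.
by apply: (mulgI (iota (1%g : gT n))); rewrite -e mulg1.
Qed.

Lemma iotaV n (x : gT n) : I n -> iota (x^-1)%g = ((iota x)^-1)%g.
Proof.
move=> In; have [hm _ _] := iota_spec In.
have := hm (x^-1)%g x; rewrite mulVg iota1 // => e.
by rewrite -[iota x^-1]mulg1 -(mulgV (iota x)) mulgA -e mul1g.
Qed.

Lemma exists_H : exists H : set G, [/\ is_subgroup H,
  (forall t : G, (exists N, forall i, (N < i)%N -> t i = 1%g) -> H t),
  (exists (T : finType) (x0 : T) (g : T -> G),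
     forall x, exists a h, H h /\ x = prod_mul (g a) h) &
  (exists g : G, forall h, H h -> ~ H (prod_mul g h))].
Proof.
have [Uf [UU FU]] := ultraFilterLemma Ffil_proper.
have UP : ProperFilter Uf by case: UU.
have UF : Filter Uf by case: UP.
have Unot0 : ~ Uf set0 by apply: filter_not_empty.
have UI : Uf I by apply: FU; exists 0%N.
pose H : set G := fun x => Uf [set n | I n /\ iota (x n) = 1%g].
have Hmul : forall x y, H x -> H y -> H (prod_mul x y).
  move=> x y hx hy; apply: filterS (filterI hx hy) => n [[In ex] [_ ey]]; split => //.
  by have [hm _ _] := iota_spec In; rewrite /prod_mul hm ex ey mulg1.
have Hinv : forall x, H x -> H (prod_inv x).
  move=> x hx; apply: filterS hx => n [In ex]; split => //.
  by rewrite /prod_inv iotaV // ex invg1.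
exists H; split.
- split; last by split.
  by apply: filterS UI => n In; split => //; rewrite /prod_one iota1.
- move=> t [N hN]; apply: FU; exists N.+1 => n Nn In; split => //.
  by rewrite hN ?iota1.
- have pre : forall n (z : Gamma), exists x : gT n, I n -> iota x = z.
    move=> n z; case: (pselect (I n)) => In; last by exists 1%g.
    by have [_ _ hs] := iota_spec In; have [x hx] := hs z; exists x.
  pose g (z : Gamma) : G := fun n => sval (cid (pre n z)).
  have hg : forall z n, I n -> iota (g z n) = z by move=> z n; exact: (svalP (cid (pre n z))).
  exists Gamma, 1%g, g => x.
  have [z hz] : exists z : Gamma, Uf [set n | I n /\ iota (x n) = z].
    apply: contrapT => hn.
    have hc : forall z : Gamma, Uf (~` [set n | I n /\ iota (x n) = z]).
      move=> z; case: (in_ultra_setVsetC [set n | I n /\ iota (x n) = z] UU) => // hz.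
      by exfalso; apply: hn; exists z.
    have hs : forall s : seq Gamma, Uf [set n | I n /\ forall z, z \in s ->
        ~ (I n /\ iota (x n) = z)].
      elim=> [|z s IH]; first by apply: filterS UI => n In; split.
      apply: filterS (filterI IH (hc z)) => n [[In hn'] hnz]; split => // w.
      by rewrite in_cons => /orP[/eqP ->|/hn'].
    apply: Unot0; apply: filterS (hs (enum Gamma)) => n [In hn'].
    by apply: (hn' (iota (x n))); rewrite ?mem_enum.
  exists z, (prod_mul (prod_inv (g z)) x); split.
    apply: filterS hz => n [In ex]; split => //.
    have [hm _ _] := iota_spec In.
    by rewrite /prod_mul /prod_inv hm iotaV // hg // ex mulVg.
  by apply: functional_extensionality_dep => n; rewrite /prod_mul /prod_inv mulKVg.
- have ne : forall n, exists a : gT n, a != 1%g.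
    move=> n; have /card_gt1P [a [b [_ _ ab]]] := hnt n.
    case: (eqVneq a 1%g) => [ea|]; last by exists a.
    by exists b; rewrite eq_sym -ea.
  pose g1 : G := fun n => sval (cid (ne n)).
  exists g1 => h Hh Hgh.
  have : H g1.
    have -> : g1 = prod_mul (prod_mul g1 h) (prod_inv h).
      apply: functional_extensionality_dep => n.
      by rewrite /prod_mul /prod_inv mulgK.
    exact: Hmul Hgh (Hinv _ Hh).
  move=> Hg1; apply: Unot0; apply: filterS Hg1 => n [In e].
  have [_ hinj _] := iota_spec In.
  have : g1 n = 1%g by apply: hinj; rewrite e iota1.
  by apply/eqP; exact: (svalP (cid (ne n))).
Qed.
End Construct.

Theorem mainTheorem6 (R : realType) (gT : nat -> finGroupType) (Gamma : finGroupType)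
  (hnontriv : forall n, (1 < #|gT n|)%N)
  (hinf : infinite_set [set n : nat | (setTfor (gT n) \isog setTfor Gamma)%g]) :
  exists H : set (prodG gT), is_subgroup H /\ ~ haar_measurable R H.
Proof.
have [H [hs hf hc ho]] := exists_H hnontriv hinf.
exists H; split => //.
exact: (@not_meas gT R hnontriv H hs hf hc ho).
Qed.
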